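(* Let $G=\vec{C}_5^{1,2}$ and let $\mathbb K$ be a field of characteristic $0$. Then for every $n\ge 1$, $\dim_{\mathbb K}\Omega_n(G;\mathbb K)=10$, and a basis of $\Omega_n(G;\mathbb K)$ is given by the ten elements $\{\alpha_a^{(n)},\beta_a^{(n)}\}_{a\in\mathbb Z_5}$, where \[ \alpha_a^{(n)}=e_{a,(a+1),(a+2),\ldots,(a+n)},\qquad \beta_a^{(n)}=\sum_{j=1}^n(-1)^{n-j}\,e_{a,a+1,\ldots,a+j-1,a+j+1,a+j+2,\ldots,a+n+1}, \] all vertex labels being read modulo $5$.
   Context: GLMY path complex. Let $\mathbb K$ be a field of characteristic $0$ and $V$ a finite set. An elementary $n$-path is a sequence $(v_0,\dots,v_n)$ of vertices, written $e_{v_0v_1\cdots v_n}$; $\Lambda_n(V)$ is the $\mathbb K$-span of elementary $n$-paths, with boundary $\partial e_{v_0\cdots v_n}=\sum_{j=0}^n(-1)^j e_{v_0\cdots\widehat{v_j}\cdots v_n}$. The regular path space $R_n(V)$ is the quotient of $\Lambda_n(V)$ by the span of elementary paths with $v_{k-1}=v_k$ for some $k$ (such paths are identified with $0$); $\partial$ descends to $R_*$. For a finite digraph $G=(V,E)$ without loops, $A_n(G)\subset R_n(V)$ is the span of elementary paths $e_{v_0\cdots v_n}$ with $(v_k\to v_{k+1})\in E$ for all $k$ (allowed paths). Set $\Omega_0=A_0$, $\Omega_1=A_1$, and $\Omega_n(G)=\{u\in A_n(G):\partial u\in A_{n-1}(G)\}$ for $n\ge 2$. Then $(\Omega_*(G),\partial)$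 is a chain complex (the path complex) and its homology $H_n^{\mathrm{path}}(G;\mathbb K)$ is the path homology. Circulant digraph: for $n\ge 3$ and $S\subset\mathbb Z_n$ with $0\notin S$, $\vec{C}_n^S$ has vertex set $\mathbb Z_n$ and an arrow $a\to a+s$ for every $a\in\mathbb Z_n$, $s\in S$; $\vec C_n^{1,2}$ means $S=\{1,2\}$. *)

(* Defs.v *)
From HB Require Import structures.
From mathcomp Require Import all_boot all_order all_algebra.
Set Implicit Arguments.
Unset Strict Implicit.
Unset Printing Implicit Defensive.
Import GRing.Theory.
Local Open Scope ring_scope.

(* An n-chain (linear combination of elementary n-paths
   e_{v_0...v_n}) is represented by its coefficient function on
   (n.+1)-tuples of vertices, an element of the K-vector space
   {ffun (n.+1).-tuple V -> K^o}.  The regular space R_n is modelled by the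
   chains supported on regular tuples; the quotient map Lambda_n -> R_n
   discards the coefficients on irregular tuples. *)

Section PathComplex.
Variables (K : fieldType) (V : finType) (E : rel V).

Definition chain (n : nat) := {ffun n.-tuple V -> K^o}.

Definition epath (n : nat) (p : n.-tuple V) : chain n :=
  [ffun q : n.-tuple V => if q == p then 1 else 0].

Definition regular (s : seq V) : bool :=
  if s is x :: t then path (fun a b => a != b) x t else true.

Definition allowed (s : seq V) : bool :=
  if s is x :: t then path E x t else true.

Definition delete_at (j : nat) (s : seq V) : seq V := take j s ++ drop j.+1 s.

Definition bnd (n : nat) (u : chain n.+1) : chain n :=
  [ffun q : n.-tuple V =>
     \sum_(p : n.+1.-tuple V) \sum_(j < n.+1 | delete_at j p == q)
        (-1) ^+ j * u p].

Definition nonallowed_part (n : nat) (u : chain n) : chain n :=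
  [ffun q : n.-tuple V => if allowed q then 0 else u q].

(* the quotient to R_{n-1} followed by the test "lies in A_{n-1}":
   coefficients on regular non-allowed paths *)
Definition reg_nonallowed_part (n : nat) (u : chain n) : chain n :=
  [ffun q : n.-tuple V => if regular q && ~~ allowed q then u q else 0].

Definition A_space (n : nat) : {vspace chain n} :=
  lker (linfun (@nonallowed_part n)).

(* Omega_n for the paths with n+1 vertices (n >= 1):
   u in A_n with  d u in A_{n-1}  (computed in R_{n-1}). *)
Definition Omega (n : nat) : {vspace chain n.+1} :=
  (A_space n.+1 :&: lker (linfun (fun u => reg_nonallowed_part (bnd u))))%VS.

End PathComplex.

Definition circulant (m : nat) (S : {set 'Z_m}) : rel 'Z_m :=
  fun a b => (b - a) \in S.

Definition C5_12 : rel 'Z_5 := circulant [set (1 : 'Z_5); 2].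

Definition alpha (K : fieldType) (n : nat) (a : 'Z_5) : chain K 'Z_5 n.+1 :=
  epath K [tuple (a + (i : nat)%:R : 'Z_5) | i < n.+1].

Definition skip_path (n : nat) (a : 'Z_5) (j : nat) : n.+1.-tuple 'Z_5 :=
  [tuple (a + (if (i < j)%N then (i : nat) else (i : nat).+1)%:R : 'Z_5) | i < n.+1].

Definition beta (K : fieldType) (n : nat) (a : 'Z_5) : chain K 'Z_5 n.+1 :=
  \sum_(1 <= j < n.+1) (-1) ^+ (n - j) *: epath K (skip_path n a j).

(* Main.v *)
Require Import Defs.
From HB Require Import structures.
From mathcomp Require Import all_boot all_order all_algebra.
From mathcomp Require Import ring zify.
Local Open Scope ring_scope.
Set Implicit Arguments.
Unset Strict Implicit.
Unset Printing Implicit Defensive.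
Import GRing.Theory.

Notation Z5 := 'Z_5.
Definition S12 : {set Z5} := [set 1; 2].

Lemma inS (x : Z5) : (x \in S12) = (x == 1) || (x == 2).
Proof. by rewrite !inE. Qed.

Lemma EE (x y : Z5) : C5_12 x y = (y - x \in S12). Proof. by []. Qed.

Definition dd (s : seq Z5) k := s`_k.+1 - s`_k.

Lemma allowedP (s : seq Z5) :
  reflect (forall k, (k.+1 < size s)%N -> dd s k \in S12) (allowed C5_12 s).
Proof.
case: s => [|x t] /=; first by constructor.
by apply: (iffP (pathP 0)) => H k Hk; apply: H.
Qed.

Lemma regularP (s : seq Z5) :
  reflect (forall k, (k.+1 < size s)%N -> dd s k != 0) (regular s).
Proof.
case: s => [|x t] /=; first by constructor.
apply: (iffP (pathP 0)) => H k Hk; have := H k Hk;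
  by rewrite /dd subr_eq0 eq_sym.
Qed.

Lemma nth_del j (s : seq Z5) k : (j < size s)%N ->
  (delete_at j s)`_k = s`_(if (k < j)%N then k else k.+1).
Proof.
move=> Hj; rewrite /delete_at nth_cat size_take Hj.
case: ifP => Hk; first by rewrite nth_take.
rewrite nth_drop; congr (nth _ _ _); move/negbT: Hk; rewrite -leqNgt => Hk.
by rewrite addSn subnKC.
Qed.

Lemma size_del j (s : seq Z5) : (j < size s)%N -> size (delete_at j s) = (size s).-1.
Proof.
move=> Hj; rewrite /delete_at size_cat size_take Hj size_drop.
by case: (size s) Hj => // m Hm; rewrite subSS /= subnKC.
Qed.

Definition mk N (f : nat -> Z5) : N.-tuple Z5 := [tuple f (nat_of_ord i) | i < N].

Lemma nth_mk N f k : (k < N)%N -> (mk N f)`_k = f k.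
Proof. by move=> Hk; rewrite (nth_mktuple _ _ (Ordinal Hk)). Qed.

Lemma tupleP' N (p q : N.-tuple Z5) : (forall k, (k < N)%N -> p`_k = q`_k) -> p = q.
Proof.
move=> H; apply: val_inj; apply: (@eq_from_nth _ 0); first by rewrite !size_tuple.
by move=> k; rewrite size_tuple; apply: H.
Qed.

Lemma tuple_steps N (p q : N.+1.-tuple Z5) : p`_0 = q`_0 ->
  (forall k, (k < N)%N -> dd p k = dd q k) -> p = q.
Proof.
move=> H0 H; apply: tupleP'; elim=> [//|k IH] Hk.
have := H k Hk; rewrite /dd IH ?(ltnW Hk) // => /eqP; rewrite (can2_eq (subrK _) (addrK _)).
by rewrite subrK => /eqP.
Qed.

Lemma natdiff (a : Z5) m d : (a + (m + d)%:R) - (a + m%:R) = d%:R.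
Proof. rewrite natrD; ring. Qed.

Lemma zcheck1 (s t : Z5) : s \in S12 -> t \in S12 -> s + t != 0.
Proof. by rewrite !inS; case: s => -[|[|[|[|[|//]]]]] ?; case: t => -[|[|[|[|[|//]]]]] ?. Qed.

Definition ins n (j : nat) (c : Z5) (q : n.-tuple Z5) : n.+1.-tuple Z5 :=
  mk n.+1 (fun k => if (k < j)%N then q`_k else if k == j then c else q`_k.-1).
Definition setv N (p : N.-tuple Z5) (j : nat) (c : Z5) : N.-tuple Z5 :=
  mk N (fun k => if k == j then c else p`_k).
Definition delt n (p : n.+1.-tuple Z5) (j : nat) : n.-tuple Z5 :=
  mk n (fun k => p`_(if (k < j)%N then k else k.+1)).

Lemma del_delt n (p : n.+1.-tuple Z5) j : (j < n.+1)%N ->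
  delete_at j p = delt p j :> seq Z5.
Proof.
move=> Hj; apply: (@eq_from_nth _ 0).
  by rewrite size_del ?size_tuple.
move=> k; rewrite size_del ?size_tuple // => Hk.
by rewrite nth_del ?size_tuple // nth_mk.
Qed.

Lemma ins_eq n (p : n.+1.-tuple Z5) (q : n.-tuple Z5) j c : (j <= n)%N ->
  (ins j c q == p) = (c == p`_j) && (delt p j == q).
Proof.
move=> Hj; apply/eqP/andP => [<-|[/eqP -> /eqP <-]].
  split; first by rewrite nth_mk // ltnn eqxx.
  apply/eqP/tupleP' => k Hk; rewrite !nth_mk //; last first.
    by case: ifP => // _; apply: leq_trans Hk _.
  case: (ltnP k j) => Hkj; first by rewrite Hkj.
  by rewrite ltnNge ltnW //= gtn_eqF.
apply: tupleP' => k Hk; rewrite nth_mk //.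
case: ltngtP => Hkj.
- by rewrite nth_mk ?Hkj //; apply: leq_trans Hkj Hj.
- rewrite nth_mk; last by case: k Hk Hkj.
  case: k Hk Hkj => // k Hk Hkj; rewrite /= ltnNge -ltnS Hkj /=.
  done.
- by rewrite Hkj.
Qed.

Lemma ins_delt n (p : n.+1.-tuple Z5) j c : (j <= n)%N ->
  ins j c (delt p j) = setv p j c.
Proof.
move=> Hj; apply: tupleP' => k Hk; rewrite nth_mk // [in RHS]nth_mk //.
case: ltngtP => Hkj.
- by rewrite nth_mk ?Hkj //; apply: leq_trans Hkj Hj.
- rewrite nth_mk; last by case: k Hk Hkj.
  by case: k Hk Hkj => // k Hk Hkj; rewrite /= ltnNge -ltnS Hkj.
- by [].
Qed.

Lemma setv_id N (p : N.-tuple Z5) j : setv p j p`_j = p.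
Proof. by apply: tupleP' => k Hk; rewrite nth_mk //; case: eqP => // ->. Qed.

Section Lin.
Variable K : fieldType.

Lemma nap_lin n : linear (@nonallowed_part K Z5 C5_12 n).
Proof.
move=> a u v; apply/ffunP => q; rewrite !ffunE.
by case: ifP; rewrite ?scaler0 ?addr0.
Qed.

Definition FB n (u : chain K Z5 n.+1) := reg_nonallowed_part C5_12 (bnd u).

Lemma FB_lin n : linear (@FB n).
Proof.
move=> a u v; apply/ffunP => q; rewrite /FB !ffunE.
case: ifP; rewrite ?scaler0 ?addr0 // => _.
rewrite scaler_sumr -big_split; apply: eq_bigr => p _.
rewrite scaler_sumr -big_split; apply: eq_bigr => j _ /=.
by rewrite !ffunE /= scalerAr mulrDr.
Qed.

End Lin.
HB.instance Definition _ (K : fieldType) (n : nat) := GRing.isLinear.Build K (chain K Z5 n) (chain K Z5 n) *:%R (@nonallowed_part K Z5 C5_12 n) (@nap_lin K n).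
HB.instance Definition _ (K : fieldType) (n : nat) := GRing.isLinear.Build K (chain K Z5 n.+1) (chain K Z5 n) *:%R (@FB K n) (@FB_lin K n).
Section Lin2.
Variable K : fieldType.
Lemma memA n (u : chain K Z5 n) :
  (u \in A_space K C5_12 n) = [forall p : n.-tuple Z5, ~~ allowed C5_12 p ==> (u p == 0)].
Proof.
rewrite /A_space memv_ker lfunE /=; apply/eqP/forallP => [H p|H].
  by apply/implyP => Hp; move/ffunP: H => /(_ p); rewrite !ffunE (negbTE Hp) => ->.
by apply/ffunP => p; rewrite !ffunE; case: ifP => // Hp; move: (H p); rewrite Hp => /eqP.
Qed.

Lemma memO n (u : chain K Z5 n.+1) : (u \in Omega K C5_12 n) =
  (u \in A_space K C5_12 n.+1) && [forall q : n.-tuple Z5, (regular q && ~~ allowed C5_12 q) ==> (bnd u q == 0)].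
Proof.
rewrite /Omega memv_cap; congr (_ && _).
rewrite memv_ker (_ : linfun _ = linfun (@FB K n)) // lfunE /= /FB.
apply/eqP/forallP => [H q|H].
  by apply/implyP => Hq; move/ffunP: H => /(_ q); rewrite !ffunE Hq => ->.
by apply/ffunP => q; rewrite !ffunE; case: ifP => // Hq; move: (H q); rewrite Hq ffunE => /eqP.
Qed.
End Lin2.

Lemma pos n (p : n.+1.-tuple Z5) (q : n.-tuple Z5) (j : nat) i :
  allowed C5_12 p -> (j < n.+1)%N -> delete_at j p = q ->
  (i.+1 < n)%N -> dd q i \notin S12 -> j = i.+1.
Proof.
move=> /allowedP Hp Hj Hq Hi; rewrite -Hq /dd !nth_del ?size_tuple //.
case: (ltngtP j i.+1) => Hji //.
- by move=> /negP []; apply: (Hp i.+1); rewrite size_tuple.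
- by move=> /negP []; apply: (Hp i); rewrite size_tuple ltnS ltnW.
Qed.

Section Bnd.
Variable K : fieldType.

Lemma bnd_ins n (u : chain K Z5 n.+1) (q : n.-tuple Z5) i :
  (forall p : n.+1.-tuple Z5, ~~ allowed C5_12 p -> u p = 0) ->
  (i.+1 < n)%N -> dd q i \notin S12 ->
  bnd u q = (-1) ^+ i.+1 * \sum_(c : Z5) u (ins i.+1 c q).
Proof.
move=> Hu Hi Hq; rewrite ffunE.
have Hi1 : (i.+1 < n.+1)%N by rewrite ltnS ltnW.
transitivity (\sum_(p : n.+1.-tuple Z5) (-1) ^+ i.+1 *
   \sum_(c : Z5) (if ins i.+1 c q == p then u p else 0)).
  apply: eq_bigr => p _.
  case Hp: (allowed C5_12 p); last first.
    rewrite Hu ?Hp // big1 => [|j _]; last exact: mulr0.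
    by rewrite big1 ?mulr0 // => c _; case: ifP.
  have E1 : (delete_at i.+1 p == q) = (delt p i.+1 == q).
    by rewrite (del_delt p Hi1).
  rewrite (eq_bigr (fun c => if (c == p`_i.+1) && (delt p i.+1 == q) then u p else 0)); last first.
    move=> c _; rewrite ins_eq //; exact: ltnW.
  case Hd: (delt p i.+1 == q).
  - rewrite (bigD1 (Ordinal Hi1)) /=; last by rewrite E1.
    rewrite big1 ?addr0; last first.
      move=> j /andP [/eqP Hdj /eqP Hj]; exfalso; apply: Hj; apply: val_inj => /=.
      exact: (pos Hp (ltn_ord j) Hdj Hi Hq).
    rewrite (bigD1 p`_i.+1) //= eqxx big1 ?addr0 // => c /negbTE ->; by [].
  - rewrite big1; last first.
      move=> j /eqP Hdj; exfalso; move: Hd.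
      by rewrite -E1 -(pos Hp (ltn_ord j) Hdj Hi Hq) Hdj eqxx.
    by rewrite big1 ?mulr0 // => c _; rewrite andbF.
rewrite -mulr_sumr; congr (_ * _); rewrite exchange_big /=; apply: eq_bigr => c _.
by rewrite -big_mkcond /= (eq_bigl (fun p => p == ins i.+1 c q)) ?big_pred1_eq // => p; rewrite eq_sym.
Qed.
End Bnd.

Section Good.
Variable K : fieldType.

Definition good n (u : chain K Z5 n.+1) :=
  (forall p : n.+1.-tuple Z5, ~~ allowed C5_12 p -> u p = 0) /\
  (forall (q : n.-tuple Z5) i, (i.+1 < n)%N -> regular q -> dd q i \notin S12 ->
     \sum_(c : Z5) u (ins i.+1 c q) = 0).

Lemma OmegaP n (u : chain K Z5 n.+1) : u \in Omega K C5_12 n <-> good u.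
Proof.
rewrite memO memA; split.
  move=> /andP [/forallP HA /forallP HB].
  have H1 : forall p : n.+1.-tuple Z5, ~~ allowed C5_12 p -> u p = 0.
    by move=> p Hp; move: (HA p); rewrite Hp => /eqP.
  split => // q i Hi Hr Hq.
  have Hna : ~~ allowed C5_12 q.
    apply/negP => /allowedP Ha; move/negP: Hq; apply; apply: Ha; by rewrite size_tuple.
  move: (HB q); rewrite Hr Hna /= (bnd_ins H1 Hi Hq) mulf_eq0 signr_eq0 /=.
  by move/eqP.
move=> [H1 H2]; apply/andP; split; apply/forallP.
  by move=> p; apply/implyP => Hp; rewrite H1.
move=> q; apply/implyP => /andP [Hr Hna].
case: (pickP (fun k : 'I_n => (k.+1 < n)%N && (dd q k \notin S12))) => [k /andP [Hk Hdk]|Hno].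
  by rewrite (bnd_ins H1 Hk Hdk) H2 ?mulr0.
exfalso; move/negP: Hna; apply; apply/allowedP => k; rewrite size_tuple => Hk.
have Hk' : (k < n)%N by apply: ltnW.
by move: (Hno (Ordinal Hk')); rewrite /= Hk /= => /negbFE.
Qed.
End Good.

Ltac z5 e := case: e => -[|[|[|[|[|//]]]]] ?.

Lemma S_ne0 (s : Z5) : s \in S12 -> s != 0.
Proof. by rewrite inS; z5 s. Qed.

Lemma setv_dd n (p : n.+1.-tuple Z5) i c k : (i.+1 < n)%N -> (k < n)%N ->
  dd (setv p i.+1 c) k =
  if k == i then c - p`_i else if k == i.+1 then p`_i.+2 - c else dd p k.
Proof.
move=> Hi Hk; rewrite /dd !nth_mk //; last by apply: ltnW.
rewrite eqSS; case: (k =P i) => [->|Hki].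
  by rewrite (ltn_eqF (ltnSn i)).
by case: (k =P i.+1) => [->|Hki1].
Qed.

Lemma setv_allowed n (p : n.+1.-tuple Z5) i c : (i.+1 < n)%N -> allowed C5_12 p ->
  allowed C5_12 (setv p i.+1 c) = (c - p`_i \in S12) && (p`_i.+2 - c \in S12).
Proof.
move=> Hi /allowedP Hp; have Hi' : (i < n)%N by apply: ltnW.
apply/allowedP/andP => [H|[H1 H2] k].
  split.
    by move: (H i); rewrite size_tuple ltnS setv_dd ?eqxx //; apply.
  by move: (H i.+1); rewrite size_tuple ltnS setv_dd ?eqxx ?(gtn_eqF (ltnSn i)) //; apply.
rewrite size_tuple ltnS => Hk; rewrite setv_dd //.
case: ifP => // _; case: ifP => // _; apply: Hp; by rewrite size_tuple ltnS.
Qed.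

Lemma ddS n (p : n.+1.-tuple Z5) i : p`_i.+2 - p`_i = dd p i + dd p i.+1.
Proof. rewrite /dd; ring. Qed.

Lemma delt_regular n (p : n.+1.-tuple Z5) i : (i.+1 < n)%N -> allowed C5_12 p ->
  regular (delt p i.+1).
Proof.
move=> Hi /allowedP Hp; apply/regularP => k; rewrite size_tuple => Hk.
have Hp' m : (m < n)%N -> dd p m \in S12 by move=> Hm; apply: Hp; rewrite size_tuple.
rewrite /dd !nth_mk //; last by apply: ltnW.
case: (ltngtP k i) => Hki.
- rewrite !ltnS Hki (ltnW Hki).
  by apply: S_ne0; apply: Hp'; apply: ltnW.
- rewrite !ltnS ltnNge (ltnW Hki) leqNgt Hki /=.
  by apply: S_ne0; apply: Hp'.
- subst k; rewrite !ltnS ltnn leqnn ddS; apply: zcheck1; apply: Hp' => //.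
  by apply: ltnW.
Qed.

Section Rel.
Variable K : fieldType.
Variable n : nat.
Variable u : chain K Z5 n.+1.
Hypothesis Hg : good u.

Lemma rel_sum (p : n.+1.-tuple Z5) i : (i.+1 < n)%N -> allowed C5_12 p ->
  p`_i.+2 - p`_i \notin S12 ->
  \sum_(e : Z5 | (e \in S12) && ((p`_i.+2 - p`_i) - e \in S12))
     u (setv p i.+1 (p`_i + e)) = 0.
Proof.
move=> Hi Hp Hs; case: Hg => H1 H2.
have Hq : dd (delt p i.+1) i \notin S12.
  by rewrite /dd !nth_mk ?ltnSn ?ltnn // ltnW.
have H := H2 _ _ Hi (delt_regular Hi Hp) Hq.
have E : \sum_(c : Z5) u (ins i.+1 c (delt p i.+1)) = \sum_(c : Z5) u (setv p i.+1 c).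
  by apply: eq_bigr => c _; rewrite ins_delt // ltnW.
rewrite E (reindex_inj (addrI p`_i)) /= in H; apply: (etrans _ H).
rewrite big_mkcond /=; apply: eq_bigr => e _.
case: ifP => // He; rewrite H1 // setv_allowed //.
by rewrite addrAC subrr add0r opprD addrA He.
Qed.
End Rel.


Lemma B4 (e : Z5) : (e \in S12) && ((2 + 2) - e \in S12) = (e == 2).
Proof. by rewrite !inS; z5 e. Qed.
Lemma B3 (e : Z5) : (e \in S12) && ((1 + 2) - e \in S12) = (e == 1) || (e == 2).
Proof. by rewrite !inS; z5 e. Qed.
Lemma inS12 (e : Z5) : e \in S12 -> e = 1 \/ e = 2.
Proof. by rewrite inS => /orP [/eqP|/eqP]; [left|right]. Qed.

Lemma dd_eq n (p : n.+1.-tuple Z5) k d : dd p k = d -> p`_k.+1 = p`_k + d.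
Proof. by rewrite /dd => <-; rewrite addrC subrK. Qed.

Lemma allowed_dd n (p : n.+1.-tuple Z5) k : allowed C5_12 p -> (k < n)%N -> dd p k \in S12.
Proof. by move=> /allowedP Hp Hk; apply: Hp; rewrite size_tuple. Qed.

Section Claims.
Variable K : fieldType.
Variable n : nat.
Variable u : chain K Z5 n.+1.
Hypothesis Hg : good u.

Lemma R1 (p : n.+1.-tuple Z5) i : (i.+1 < n)%N -> allowed C5_12 p ->
  dd p i = 2 -> dd p i.+1 = 2 -> u p = 0.
Proof.
move=> Hi Hp H1 H2.
have Hs : p`_i.+2 - p`_i = 2 + 2 by rewrite ddS H1 H2.
have := rel_sum Hg Hi Hp; rewrite Hs (eq_bigl (fun e => e == 2)); last by move=> e; rewrite B4.
rewrite big_pred1_eq -(dd_eq H1) setv_id; apply; by rewrite inS.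
Qed.

Lemma R2 (p : n.+1.-tuple Z5) i : (i.+1 < n)%N -> allowed C5_12 p ->
  dd p i + dd p i.+1 = 1 + 2 ->
  u (setv p i.+1 (p`_i + 1)) + u (setv p i.+1 (p`_i + 2)) = 0.
Proof.
move=> Hi Hp Hs; rewrite -ddS in Hs.
have := rel_sum Hg Hi Hp; rewrite Hs (eq_bigl (fun e => (e == 1) || (e == 2))); last by move=> e; rewrite B3.
rewrite (bigD1 1) //= (eq_bigl (fun e => e == 2)); last by move=> e; z5 e.
rewrite big_pred1_eq; apply; by rewrite inS.
Qed.
End Claims.


Lemma natd1 (a : Z5) k : (a + k.+1%:R) - (a + k%:R) = 1.
Proof. by have := natdiff a k 1; rewrite addn1. Qed.
Lemma natd2 (a : Z5) k : (a + k.+2%:R) - (a + k%:R) = 2.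
Proof. by have := natdiff a k 2; rewrite addn2. Qed.

Definition atup n (a : Z5) := mk n.+1 (fun k => a + k%:R).
Lemma alphaE K n a : alpha K n a = epath K (atup n a). Proof. by []. Qed.
Lemma skipE n a j : skip_path n a j = mk n.+1 (fun k => a + (if (k < j)%N then k else k.+1)%:R).
Proof. by []. Qed.

Lemma atup0 n a : (atup n a)`_0 = a.
Proof. by rewrite nth_mk // addr0. Qed.

Lemma dd_atup n a k : (k < n)%N -> dd (atup n a) k = 1.
Proof. by move=> Hk; rewrite /dd !nth_mk ?natd1 // ltnW. Qed.

Lemma skip0 n a j : (0 < j)%N -> (skip_path n a j)`_0 = a.
Proof. by move=> Hj; rewrite skipE nth_mk // Hj addr0. Qed.

Lemma dd_skip n a j k : (k < n)%N ->
  dd (skip_path n a j) k = if k.+1 == j then 2 else 1.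
Proof.
move=> Hk; rewrite skipE /dd !nth_mk //; last exact: ltnW.
case: (ltngtP k.+1 j) => Hkj.
- exact: natd1.
- exact: natd1.
- exact: natd2.
Qed.

Section Claims2.
Variable K : fieldType.
Variable n : nat.
Variable u : chain K Z5 n.+1.
Hypothesis Hg : good u.

Lemma claimA k : forall (p : n.+1.-tuple Z5) i, allowed C5_12 p -> (i + k.+1 < n)%N ->
  dd p i = 2 -> dd p (i + k.+1) = 2 -> u p = 0.
Proof.
elim: k => [|k IH] p i Hp Hik H1 H2.
  by rewrite addn1 in Hik H2; apply: (R1 Hg Hik Hp H1 H2).
set j := (i + k.+1)%N.
have Hj : (j.+1 < n)%N by rewrite /j -addnS.
have H2' : dd p j.+1 = 2 by rewrite /j -addnS.
have Hj' : (j < n)%N by apply: ltnW.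
case: (inS12 (allowed_dd Hp Hj')) => Hdj; last exact: (IH p i Hp Hj' H1 Hdj).
have Hs : dd p j + dd p j.+1 = 1 + 2 by rewrite Hdj H2'.
have R := R2 Hg Hj Hp Hs.
rewrite -(dd_eq Hdj) setv_id in R.
set p' := setv p j.+1 (p`_j + 2) in R.
have Hp' : allowed C5_12 p'.
  rewrite setv_allowed //; apply/andP; split.
    by rewrite addrAC subrr add0r inS.
  by rewrite opprD addrA ddS Hs inS.
have Hij : (i < j)%N by rewrite /j; lia.
have Hd1 : dd p' i = 2.
  by rewrite setv_dd ?(ltn_eqF Hij) ?(ltn_eqF (leqW Hij)) //; lia.
have Hd2 : dd p' j = 2.
  by rewrite setv_dd // eqxx addrAC subrr add0r.
by move: R; rewrite (IH p' i Hp' Hj' Hd1 Hd2) addr0.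
Qed.

Lemma claimB m : forall (p : n.+1.-tuple Z5) i, allowed C5_12 p -> (i + m.+1 = n)%N ->
  dd p i = 2 -> (forall k, (k < n)%N -> k != i -> dd p k = 1) ->
  u p = (-1) ^+ m * u (skip_path n p`_0 n).
Proof.
elim: m => [|m IH] p i Hp Hin H2 H1.
  rewrite expr0 mul1r; congr (u _).
  rewrite addn1 in Hin.
  apply: tuple_steps; first by rewrite skip0 // -Hin.
  move=> k Hk; rewrite dd_skip //.
  have -> : (k.+1 == n) = (k == i) by rewrite -Hin eqSS.
  case: (k =P i) => [->|/eqP Hki]; first by [].
  exact: H1.
have Hi : (i.+1 < n)%N by lia.
have Hd : dd p i.+1 = 1 by apply: H1 => //; exact: (negbT (gtn_eqF (ltnSn i))).
have Hs : dd p i + dd p i.+1 = 1 + 2 by rewrite H2 Hd addrC.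
have R := R2 Hg Hi Hp Hs.
rewrite -(dd_eq H2) setv_id in R.
set p'' := setv p i.+1 (p`_i + 1) in R.
have Hp'' : allowed C5_12 p''.
  rewrite setv_allowed //; apply/andP; split.
    by rewrite addrAC subrr add0r inS.
  by rewrite opprD addrA ddS Hs inS.
have H0 : p''`_0 = p`_0 by rewrite nth_mk.
have Hin' : (i.+1 + m.+1 = n)%N by rewrite addSnnS.
have Hd2 : dd p'' i.+1 = 2.
  rewrite setv_dd // (gtn_eqF (ltnSn i)) eqxx opprD addrA ddS Hs; by apply/eqP.
have Hd1 : forall k, (k < n)%N -> k != i.+1 -> dd p'' k = 1.
  move=> k Hk Hki; rewrite setv_dd // (negbTE Hki).
  case: (k =P i) => [_|/eqP Hki']; first by rewrite addrAC subrr add0r.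
  exact: H1.
have E := IH p'' i.+1 Hp'' Hin' Hd2 Hd1.
rewrite H0 in E.
rewrite -[u p](addKr (u p'')) R addr0 E exprS mulN1r mulNr.
done.
Qed.
End Claims2.

Section Span.
Variable K : fieldType.
Variable n : nat.

Definition Aq (q : n.+1.-tuple Z5) := [forall k : 'I_n, dd q k == 1].
Definition Bq (q : n.+1.-tuple Z5) j :=
  [forall k : 'I_n, dd q k == (if k.+1 == j then 2 else 1)].

Lemma atup_eq (q : n.+1.-tuple Z5) a : (q == atup n a) = (a == q`_0) && Aq q.
Proof.
apply/eqP/andP => [->|[/eqP -> /forallP H]].
  split; first by rewrite atup0.
  by apply/forallP => k; rewrite dd_atup.
apply: tuple_steps; first by rewrite atup0.
by move=> k Hk; rewrite dd_atup //; apply/eqP; exact: (H (Ordinal Hk)).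
Qed.

Lemma skip_eq (q : n.+1.-tuple Z5) a j : (0 < j)%N ->
  (q == skip_path n a j) = (a == q`_0) && Bq q j.
Proof.
move=> Hj; apply/eqP/andP => [->|[/eqP -> /forallP H]].
  split; first by rewrite skip0.
  by apply/forallP => k; rewrite dd_skip.
apply: tuple_steps; first by rewrite skip0.
by move=> k Hk; rewrite dd_skip //; apply/eqP; exact: (H (Ordinal Hk)).
Qed.

Lemma beta_eval a (q : n.+1.-tuple Z5) :
  beta K n a q = \sum_(j < n) (-1) ^+ (n - j.+1) * (if (a == q`_0) && Bq q j.+1 then 1 else 0).
Proof.
rewrite /beta sum_ffunE big_add1 /= big_mkord; apply: eq_bigr => j _.
by rewrite !ffunE skip_eq.
Qed.

Lemma rhs_eval (f g : Z5 -> K) (q : n.+1.-tuple Z5) :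
  (\sum_(a : Z5) f a *: alpha K n a + \sum_(a : Z5) g a *: beta K n a) q =
  (if Aq q then f q`_0 else 0) +
  g q`_0 * \sum_(j < n) (-1) ^+ (n - j.+1) * (if Bq q j.+1 then 1 else 0).
Proof.
rewrite ffunE !sum_ffunE; congr (_ + _).
  rewrite (bigD1 q`_0) //= big1 ?addr0; last first.
    move=> a Ha; rewrite ffunE alphaE ffunE atup_eq (negbTE Ha) /=; exact: mulr0.
  rewrite ffunE alphaE ffunE atup_eq eqxx /=.
  by case: (Aq q); [exact: mulr1 | exact: mulr0].
rewrite (bigD1 q`_0) //= big1 ?addr0; last first.
  move=> a Ha; rewrite ffunE beta_eval big1; first exact: mulr0.
  by move=> j _; rewrite (negbTE Ha) /= mulr0.
by rewrite ffunE beta_eval eqxx.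
Qed.
End Span.

Section Decomp.
Variable K : fieldType.
Variable n : nat.

Lemma AqE (q : n.+1.-tuple Z5) k : Aq q -> (k < n)%N -> dd q k = 1.
Proof. by move=> /forallP H Hk; apply/eqP; exact: (H (Ordinal Hk)). Qed.
Lemma BqE (q : n.+1.-tuple Z5) j k : Bq q j -> (k < n)%N -> dd q k = if k.+1 == j then 2 else 1.
Proof. by move=> /forallP H Hk; apply/eqP; exact: (H (Ordinal Hk)). Qed.

Lemma Aq_allowed (q : n.+1.-tuple Z5) : Aq q -> allowed C5_12 q.
Proof.
move=> H; apply/allowedP => k; rewrite size_tuple ltnS => Hk.
by rewrite (AqE H Hk) inS.
Qed.
Lemma Bq_allowed (q : n.+1.-tuple Z5) j : Bq q j -> allowed C5_12 q.
Proof.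
move=> H; apply/allowedP => k; rewrite size_tuple ltnS => Hk.
by rewrite (BqE H Hk); case: ifP; rewrite inS.
Qed.

Lemma decomp (u : chain K Z5 n.+1) : good u ->
  u = \sum_(a : Z5) u (atup n a) *: alpha K n a + \sum_(a : Z5) u (skip_path n a n) *: beta K n a.
Proof.
move=> Hg; apply/ffunP => q; rewrite (rhs_eval (fun a => u (atup n a)) (fun a => u (skip_path n a n))).
case Hq: (allowed C5_12 q); last first.
  have -> : u q = 0 by apply: (proj1 Hg); rewrite Hq.
  have -> : Aq q = false by apply/negP => /Aq_allowed; rewrite Hq.
  rewrite add0r big1 ?mulr0 // => j _.
  have -> : Bq q j.+1 = false by apply/negP => /Bq_allowed; rewrite Hq.
  exact: mulr0.
have Hd k : (k < n)%N -> dd q k = 1 \/ dd q k = 2 by move=> Hk; apply: inS12; exact: allowed_dd.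
case: (pickP (fun k : 'I_n => dd q k == 2)) => [i /eqP Hi | Hno].
  have HA : Aq q = false.
    by apply/negP => HA; move: (AqE HA (ltn_ord i)); rewrite Hi.
  rewrite HA add0r.
  case: (pickP (fun k : 'I_n => (k != i) && (dd q k == 2))) => [i' /andP [Hii' /eqP Hi'] | Hno'].
    have HB j : Bq q j.+1 = false.
      apply/negP => HB; move: (BqE HB (ltn_ord i)) (BqE HB (ltn_ord i')).
      rewrite Hi Hi'; case: ifP => [/eqP Ej|]; last by [].
      case: ifP => [/eqP Ej'|]; last by [].
      by move: Hii'; rewrite -(inj_eq val_inj) /= -eqSS Ej Ej' eqxx.
    rewrite big1 ?mulr0; last by move=> j _; rewrite HB mulr0.
    case: (ltngtP i i') => Hlt.
    - apply: (claimA Hg (k := (i' - i.+1)%N) (i := i)) => //.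
        by rewrite subnSK // addnC subnK ?(ltnW Hlt) //.
      by rewrite subnSK // addnC subnK ?(ltnW Hlt) //.
    - apply: (claimA Hg (k := (i - i'.+1)%N) (i := i')) => //.
        by rewrite subnSK // addnC subnK ?(ltnW Hlt) //.
      by rewrite subnSK // addnC subnK ?(ltnW Hlt) //.
    - by move: Hii'; rewrite (ord_inj Hlt) eqxx.
  have H1 k : (k < n)%N -> k != i -> dd q k = 1.
    move=> Hk Hki; case: (Hd k Hk) => // H2.
    by move: (Hno' (Ordinal Hk)); rewrite /= -(inj_eq val_inj) /= Hki H2 eqxx.
  rewrite (claimB Hg (m := (n - i.+1)%N) (p := q) (i := i)) //; last by have := ltn_ord i; lia.
  rewrite mulrC; congr (_ * _).
  rewrite (bigD1 i) //= big1 ?addr0.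
    have -> : Bq q i.+1.
      apply/forallP => k; rewrite eqSS; case: (eqVneq (k : nat) i) => [Eki|Hki].
        by rewrite Eki Hi.
      by rewrite H1.
    by rewrite mulr1.
  move=> j Hji; have -> : Bq q j.+1 = false.
    apply/negP => HB; move: (BqE HB (ltn_ord i)); rewrite Hi eqSS.
    by rewrite eq_sym (inj_eq val_inj) (negbTE Hji).
  exact: mulr0.
have HA : Aq q.
  apply/forallP => k; case: (Hd k (ltn_ord k)) => H; first by rewrite H.
  by move: (Hno k); rewrite H eqxx.
rewrite HA big1 ?mulr0 ?addr0; last first.
  move=> j _; have -> : Bq q j.+1 = false.
    apply/negP => HB; move: (BqE HB (ltn_ord j)) (AqE HA (ltn_ord j)).
    by rewrite eqxx => ->.
  exact: mulr0.
by have /eqP <- : q == atup n q`_0 by rewrite atup_eq eqxx HA.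
Qed.
End Decomp.

Section Good2.
Variable K : fieldType.
Variable n : nat.

Lemma ins_nth (q : n.-tuple Z5) i c : (i.+1 < n)%N ->
  (ins i.+1 c q)`_i = q`_i /\ (ins i.+1 c q)`_i.+2 = q`_i.+1.
Proof.
move=> Hi; rewrite !nth_mk; try lia.
rewrite ltnSn; split => //.
by rewrite ifF ?ifF //; lia.
Qed.

Lemma alpha_good a : good (alpha K n a).
Proof.
split.
  move=> p Hp; rewrite alphaE ffunE atup_eq; case: ifP => // /andP [_ HA].
  by rewrite (Aq_allowed HA) in Hp.
move=> q i Hi _ Hq; apply: big1 => c _; rewrite alphaE ffunE.
case: eqP => // E; exfalso; move: Hq; have [E1 E2] := ins_nth q c Hi.
by rewrite /dd -E1 -E2 E !nth_mk ?natd2 ?inS //; lia.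
Qed.

Lemma beta_eval2 a (p : n.+1.-tuple Z5) :
  beta K n a p = \sum_(j < n) (-1) ^+ (n - j.+1) * (if p == skip_path n a j.+1 then 1 else 0).
Proof.
rewrite /beta sum_ffunE big_add1 /= big_mkord; apply: eq_bigr => j _.
by rewrite !ffunE.
Qed.

Lemma sum_ins (q : n.-tuple Z5) (p : n.+1.-tuple Z5) j : (j <= n)%N ->
  \sum_(c : Z5) (if ins j c q == p then 1 else 0 : K) = if delt p j == q then 1 else 0.
Proof.
move=> Hj; under eq_bigr => c _ do rewrite ins_eq //.
case: (delt p j == q); last by apply: big1 => c _; rewrite andbF.
rewrite (bigD1 p`_j) //= eqxx big1 ?addr0 // => c /negbTE Hc.
by rewrite Hc.
Qed.

Lemma delt_skip_ne a (q : n.-tuple Z5) i j : (i.+1 < n)%N -> dd q i \notin S12 ->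
  j != i -> j != i.+1 -> (delt (skip_path n a j.+1) i.+1 == q) = false.
Proof.
move=> Hi Hq Hji Hji1; apply/negP => /eqP E; move: Hq; rewrite -E /dd !nth_mk; try lia.
rewrite ltnSn ltnn skipE !nth_mk; try lia.
case: (ltnP j i) => H.
  by rewrite ifF ?ifF ?natd2 ?inS //; lia.
by rewrite ifT ?ifT ?natd2 ?inS //; lia.
Qed.

Lemma delt_skip_eq a i : (i.+1 < n)%N ->
  delt (skip_path n a i.+1) i.+1 = delt (skip_path n a i.+2) i.+1.
Proof.
move=> Hi; apply: tupleP' => k Hk; rewrite !nth_mk ?skipE; try lia.
rewrite !nth_mk; try (case: ifP; lia).
case: (ltnP k i.+1) => H.
  by rewrite ifT ?ifT ?ifT //; lia.
by rewrite ifF ?ifF ?ifF //; lia.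
Qed.

Lemma beta_good a : good (beta K n a).
Proof.
split.
  move=> p Hp; rewrite beta_eval big1 // => j _.
  case: ifP => [/andP [_ HB]|]; last by rewrite mulr0.
  by rewrite (Bq_allowed HB) in Hp.
move=> q i Hi _ Hq.
rewrite (eq_bigr (fun c => \sum_(j < n) (-1) ^+ (n - j.+1) *
   (if ins i.+1 c q == skip_path n a j.+1 then 1 else 0))); last by move=> c _; rewrite beta_eval2.
rewrite exchange_big /=.
rewrite (eq_bigr (fun j : 'I_n => (-1) ^+ (n - j.+1) *
   (if delt (skip_path n a j.+1) i.+1 == q then 1 else 0))); last first.
  by move=> j _; rewrite -mulr_sumr sum_ins //; lia.
have Hi' : (i < n)%N by lia.
rewrite (bigD1 (Ordinal Hi')) //= (bigD1 (Ordinal Hi)) /=; last first.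
  by rewrite -(inj_eq val_inj) /= (gtn_eqF (ltnSn i)).
rewrite big1 ?addr0; last first.
  move=> j /andP [Hj1 Hj2].
  have Hj1' : (j : nat) != i by move: Hj1; rewrite -(inj_eq val_inj).
  have Hj2' : (j : nat) != i.+1 by move: Hj2; rewrite -(inj_eq val_inj).
  by rewrite delt_skip_ne // mulr0.
rewrite -delt_skip_eq // -subnSK // exprS mulN1r mulNr.
exact: addNr.
Qed.
End Good2.

Section Free.
Variable K : fieldType.
Variable n : nat.
Hypothesis hn : (1 <= n)%N.

Lemma Bq_atup a j : (0 < j)%N -> (j <= n)%N -> Bq (atup n a) j = false.
Proof.
move=> Hj Hjn; apply/negP => HB.
have Hk : (j.-1 < n)%N by lia.
move: (BqE HB Hk); rewrite dd_atup // prednK // eqxx.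
by move/eqP.
Qed.

Lemma Bq_skip a j j' : (0 < j)%N -> (j <= n)%N -> (0 < j')%N -> (j' <= n)%N ->
  Bq (skip_path n a j) j' = (j' == j).
Proof.
move=> Hj Hjn Hj' Hj'n; apply/idP/eqP => [HB|->].
  have Hk : (j'.-1 < n)%N by lia.
  move: (BqE HB Hk); rewrite dd_skip // prednK // eqxx.
  by case: eqP => // _ /eqP.
by apply/forallP => k; rewrite dd_skip.
Qed.

Lemma Aq_skip a j : (0 < j)%N -> (j <= n)%N -> Aq (skip_path n a j) = false.
Proof.
move=> Hj Hjn; apply/negP => HA.
have Hk : (j.-1 < n)%N by lia.
move: (AqE HA Hk); rewrite dd_skip // prednK // eqxx.
by move/eqP.
Qed.

Lemma free_ab (f g : Z5 -> K) :
  \sum_(a : Z5) f a *: alpha K n a + \sum_(a : Z5) g a *: beta K n a = 0 ->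
  (forall a, f a = 0) /\ (forall a, g a = 0).
Proof.
move=> H; split => a0.
  move/ffunP: H => /(_ (atup n a0)); rewrite rhs_eval ffunE atup0.
  have -> : Aq (atup n a0) by apply/forallP => k; rewrite dd_atup.
  rewrite big1 ?mulr0 ?addr0 // => j _.
  by rewrite Bq_atup ?mulr0 //; lia.
move/ffunP: H => /(_ (skip_path n a0 n)); rewrite rhs_eval ffunE skip0 //.
rewrite Aq_skip // add0r.
have Hn : (n.-1 < n)%N by lia.
rewrite (bigD1 (Ordinal Hn)) //= big1 ?addr0.
  by rewrite Bq_skip ?prednK ?eqxx ?subnn ?expr0 ?mulr1 //; lia.
move=> j Hj; rewrite Bq_skip //; try lia.
have -> : (j.+1 == n) = false.
  by move: Hj; rewrite -(inj_eq val_inj) /=; lia.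
exact: mulr0.
Qed.
End Free.

Lemma free_helper (K : fieldType) (vT : vectType K) (X : seq vT) N : size X = N ->
  (forall k : 'I_N -> K, \sum_(i < N) k i *: X`_i = 0 -> forall i, k i = 0) -> free X.
Proof.
move=> <- H; rewrite -(in_tupleE X); apply/freeP => k Hk i; exact: H Hk i.
Qed.

Lemma main_aux (K : fieldType) (n : nat) (hn : (1 <= n)%N) :
  let B := [seq alpha K n a | a <- enum 'Z_5] ++ [seq beta K n a | a <- enum 'Z_5] in
  \dim (Omega K C5_12 n) = 10%N /\ basis_of (Omega K C5_12 n) B.
Proof.
move=> B.
have HsE0 : size (enum 'Z_5) = 5%N by rewrite -cardE card_ord.
have HsE : size (Finite.enum Z5) = 5%N by rewrite -enumT HsE0.
have Hs : size B = (5 + 5)%N by rewrite /B size_cat !size_map ?HsE ?HsE0.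
have HB : forall v, v \in B -> v \in Omega K C5_12 n.
  move=> v; rewrite mem_cat => /orP [] /mapP [a _ ->]; apply/OmegaP.
    exact: alpha_good.
  exact: beta_good.
have Hspan : (<<B>> = Omega K C5_12 n)%VS.
  apply/eqP; rewrite eqEsubv; apply/andP; split.
    by apply/span_subvP => v Hv; exact: HB.
  apply/subvP => u /OmegaP Hg; rewrite (decomp Hg); apply: memvD; apply: memv_suml => a _;
    apply: memvZ; apply: memv_span; rewrite mem_cat map_f ?mem_enum ?orbT //.
have Hfree : free B.
  apply: (free_helper Hs) => k Hk.
  rewrite big_split_ord /= in Hk.
  have E1 (i : 'I_5) : B`_(lshift 5 i) = alpha K n i.
    rewrite /= nth_cat size_map ?HsE ?HsE0 ltn_ord (nth_map (0 : 'Z_5)) ?HsE ?HsE0 //.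
    congr (alpha K n _); apply: val_inj => /=; rewrite nth_enum_ord //.
  have E2 (i : 'I_5) : B`_(rshift 5 i) = beta K n i.
    rewrite /= nth_cat size_map ?HsE ?HsE0 ltnNge leq_addr /= addKn (nth_map (0 : 'Z_5)) ?HsE ?HsE0 //.
    congr (beta K n _); apply: val_inj => /=; rewrite nth_enum_ord //.
  rewrite (eq_bigr (fun i : 'I_5 => k (lshift 5 i) *: alpha K n i)) in Hk; last by move=> i _; rewrite E1.
  rewrite [X in _ + X = _](eq_bigr (fun i : 'I_5 => k (rshift 5 i) *: beta K n i)) in Hk; last by move=> i _; rewrite E2.
  have [F1 F2] := free_ab hn (f := fun a : 'Z_5 => k (lshift 5 a)) (g := fun a : 'Z_5 => k (rshift 5 a)) Hk.
  move=> i; case: (splitP i) => j Hj.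
    by rewrite (_ : i = lshift 5 j) ?F1 //; apply: val_inj.
  by rewrite (_ : i = rshift 5 j) ?F2 //; apply: val_inj.
split; last by rewrite /basis_of Hspan eqxx Hfree.
by rewrite -Hspan (eqP Hfree) Hs.
Qed.

Unset Implicit Arguments.

Theorem mainTheorem1 (K : fieldType) (hK : [pchar K] =i pred0) (n : nat) (hn : (1 <= n)%N) :
  let B := [seq alpha K n a | a <- enum 'Z_5] ++ [seq beta K n a | a <- enum 'Z_5] in
  \dim (Omega K C5_12 n) = 10%N /\ basis_of (Omega K C5_12 n) B.
Proof. exact: (@main_aux K n hn). Qed.
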